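(* Let $2\le k_1<\dots<k_m\le n$ ($m\ge1$), $1\le i_{k_j}\le k_j-1$, with $M:=\sum_{j=1}^m i_{k_j}\le k_1$; let $\pi'=t_{k_1}^{i_{k_1}}\cdots t_{k_m}^{i_{k_m}}\in S_n$ and $\pi^\circ$ the same word in $D_n$. Let $L_1,\dots,L_u$ be pairwise distinct integers in $\{1,\dots,n-1\}$ and $\pi=w_{L_1}\cdot w_{L_2}\cdots w_{L_u}\cdot\pi^\circ$. For each $j$ define $$\varrho_{L_j}=\begin{cases} L_j & \text{if } L_j<M \text{ or } L_j\ge k_m,\\ L_j-M & \text{if } M\le L_j<k_1,\\ L_j-\sum_{x=q}^m i_{k_x} & \text{if } k_{q-1}\le L_j<k_q \text{ for some } 2\le q\le m.\end{cases}$$ Then $\ell(\pi)=\ell(\pi')+2\sum_{j=1}^u\varrho_{L_j}$.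
   Context: $D_n$ ($n\ge2$) is the Coxeter group with generators $s_{1'},s_1,\dots,s_{n-1}$ and relations $s^2=1$, $(s_i s_{i+1})^3=1$, $(s_is_j)^2=1$ for $|i-j|\ge 2$, $(s_{1'}s_2)^3=1$, $(s_{1'}s_i)^2=1$ for $i\ne 2$; $S_n$ has Coxeter generators $s_i=(i,i+1)$. In both groups $t_k=s_1\cdots s_{k-1}$; in $D_n$, $w_L=s_L s_{L-1}\cdots s_2 s_1 s_{1'} s_2\cdots s_L$. $\ell$ is Coxeter length in $D_n$ (generators $s_{1'},s_1,\dots,s_{n-1}$), resp. in $S_n$ for $\ell(\pi')$. (The hypothesis $M\le k_1$ says $\pi'$ is a standard OGS elementary element with major index $M$.) *)

(* Defs.v *)
From mathcomp Require Import all_boot all_order all_algebra.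
Set Implicit Arguments. Unset Strict Implicit. Unset Printing Implicit Defensive.
Import GRing.Theory Num.Theory.

(* Elements act on the integers (signed letters).                          *)
(* D_n generator letters are naturals: 0 stands for s_{1'}, i >= 1 for s_i. *)
(* S_n generator letters: i >= 1 stands for s_i = (i, i+1).                 *)

Local Open Scope ring_scope.

Definition swap_signed (i : nat) (x : int) : int :=
  if x == i%:Z then (i.+1)%:Z
  else if x == (i.+1)%:Z then i%:Z
  else if x == - i%:Z then - (i.+1)%:Z
  else if x == - (i.+1)%:Z then - i%:Z
  else x.

Definition actD (g : nat) (x : int) : int :=
  if g == 0%N then
    (if x == 1 then -2 else if x == 2 then -1
     else if x == -1 then 2 else if x == -2 then 1 else x)
  else swap_signed g x.

Definition actS (g : nat) (x : int) : int :=
  if x == g%:Z then (g.+1)%:Z else if x == (g.+1)%:Z then g%:Z else x.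

Local Close Scope ring_scope.

Definition evalw (act : nat -> int -> int) (w : seq nat) (x : int) : int :=
  foldr act x w.

(* Coxeter length of the group element represented by the word w over the
   finite generator type G (letters decoded by toidx): the minimal length of
   a word over G representing the same element, i.e. with the same action
   on 1..n (which determines the (signed) permutation). *)
Section CoxLen.
Variables (G : finType) (toidx : G -> nat) (act : nat -> int -> int) (n : nat).

Definition same_elt (w1 w2 : seq G) : bool :=
  [forall i : 'I_n, evalw act (map toidx w1) (i.+1)%:Z ==
                    evalw act (map toidx w2) (i.+1)%:Z].

Lemma coxlen_ex (w : seq G) :
  exists k, [exists t : k.-tuple G, same_elt t w].
Proof.
exists (size w); apply/existsP; exists (in_tuple w).
by apply/forallP => i.
Qed.

Definition coxlen (w : seq G) : nat := ex_minn (coxlen_ex w).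
End CoxLen.

(* generators of D_n : 'I_n, value 0 = s_{1'}, value i = s_i (1 <= i <= n-1) *)
Definition toD (n : nat) (w : seq nat) : seq 'I_n := pmap insub w.
Definition lenD (n : nat) (w : seq nat) : nat :=
  coxlen (fun g : 'I_n => val g) actD n (toD n w).

(* generators of S_n : 'I_n.-1, value j = s_{j+1} (1 <= j+1 <= n-1) *)
Definition toS (n : nat) (w : seq nat) : seq 'I_n.-1 :=
  pmap (fun i => insub i.-1) w.
Definition lenS (n : nat) (w : seq nat) : nat :=
  coxlen (fun g : 'I_n.-1 => (val g).+1) actS n (toS n w).

Definition t_word (k : nat) : seq nat := iota 1 k.-1.
Definition tpow_word (k e : nat) : seq nat := flatten (nseq e (t_word k)).
Definition ogs_word (m : nat) (k i : nat -> nat) : seq nat :=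
  flatten [seq tpow_word (k j) (i j) | j <- iota 1 m].
Definition wL_word (L : nat) : seq nat := rev (iota 1 L) ++ 0 :: iota 2 L.-1.

(* Main.v *)
Require Import Defs.
From mathcomp Require Import all_boot all_order all_algebra all_fingroup zify.
Set Implicit Arguments. Unset Strict Implicit. Unset Printing Implicit Defensive.
Import Order.TTheory GRing.Theory Num.Theory.
Definition winw (G : finType) (toidx : G -> nat) (act : nat -> int -> int)
  (w : seq G) : nat -> int := fun a => evalw act (map toidx w) (Posz a.+1).

Lemma evalw_rcons act w g x : evalw act (rcons w g) x = evalw act w (act g x).
Proof. by rewrite /evalw -cats1 foldr_cat. Qed.

Lemma evalw_cat act w1 w2 x : evalw act (w1 ++ w2) x = evalw act w1 (evalw act w2 x).
Proof. by rewrite /evalw foldr_cat. Qed.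

Section Generic.
Variables (G : finType) (toidx : G -> nat) (act : nat -> int -> int) (n : nat).
Variables (F : (nat -> int) -> nat) (Inv : (nat -> int) -> Prop)
  (op : G -> (nat -> int) -> (nat -> int)).
Notation win := (winw toidx act).
Hypothesis win_rcons : forall w g a, (a < n)%N -> win (rcons w g) a = op g (win w) a.
Hypothesis op_resp : forall g v v', (forall a, (a < n)%N -> v a = v' a) ->
   forall a, (a < n)%N -> op g v a = op g v' a.
Hypothesis F_resp : forall v v', (forall a, (a < n)%N -> v a = v' a) -> F v = F v'.
Hypothesis Inv_win : forall w, Inv (win w).
Hypothesis F_step : forall g v, (F (op g v) <= (F v).+1)%N.
Hypothesis F_base : forall v, Inv v -> F v = 0%N -> forall a, (a < n)%N -> v a = (Posz a.+1).
Hypothesis F_desc : forall v, Inv v -> (0 < F v)%N -> exists g, (F (op g v)).+1 = F v.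
Hypothesis op_invol : forall g v a, (a < n)%N -> op g (op g v) a = v a.
Hypothesis F_nil : F (win [::]) = 0%N.

Lemma gen_lb t : (F (win t) <= size t)%N.
Proof.
elim/last_ind: t => [|t g IH]; first by rewrite F_nil.
rewrite (F_resp (win_rcons t g)) size_rcons.
exact: leq_trans (F_step g _) _.
Qed.

Lemma gen_ub N w : F (win w) = N ->
  exists t, size t = N /\ forall a, (a < n)%N -> win t a = win w a.
Proof.
elim: N w => [|N IH] w HF.
  exists [::]; split => // a Ha; rewrite (F_base (Inv_win w) HF Ha) //.
have [g Hg] := F_desc (Inv_win w) (ltac:(by rewrite HF)).
have HF' : F (win (rcons w g)) = N.
  rewrite (F_resp (win_rcons w g)); apply/eqP; rewrite -eqSS Hg HF //.
have [t [Ht1 Ht2]] := IH _ HF'.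
exists (rcons t g); split; first by rewrite size_rcons Ht1.
move=> a Ha; rewrite win_rcons // (op_resp g Ht2 Ha).
rewrite (op_resp g (win_rcons w g) Ha) op_invol //.
Qed.

Lemma gen_coxlen w : coxlen toidx act n w = F (win w).
Proof.
rewrite /coxlen; case: ex_minnP => N HN Hmin.
have [t [Ht1 Ht2]] := gen_ub (erefl (F (win w))).
apply/eqP; rewrite eqn_leq; apply/andP; split.
  apply: Hmin; apply/existsP.
  have Hs : size t == F (win w) by rewrite Ht1.
  exists (Tuple Hs); apply/forallP => i /=.
  by have := Ht2 i (ltn_ord i); rewrite /winw => ->.
case/existsP: HN => t' /forallP Ht'.
have -> : F (win w) = F (win t').
  apply: F_resp => a Ha; have := Ht' (Ordinal Ha); rewrite /winw => /eqP -> //.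
by apply: leq_trans (gen_lb t') _; rewrite size_tuple.
Qed.
End Generic.
Definition Fw (phi : int -> int -> nat) (n : nat) (v : nat -> int) : nat :=
  \sum_(a < n) \sum_(b < n) ((a < b)%N * phi (v a) (v b))%N.
Definition phiD (x y : int) : nat := ((y < x)%R + (x + y < 0)%R)%N.
Definition phiS (x y : int) : nat := (y < x)%R.
Definition tsw (c a : nat) : nat := if a == c then c.+1 else if a == c.+1 then c else a.
Definition sw (c : nat) (v : nat -> int) : nat -> int := fun a => v (tsw c a).
Definition ng (v : nat -> int) : nat -> int := fun a => if a == 0%N then (- v 0%N)%R else v a.

Lemma Fw_resp phi n v v' : (forall a, (a < n)%N -> v a = v' a) -> Fw phi n v = Fw phi n v'.
Proof.
move=> H; apply: eq_bigr => a _; apply: eq_bigr => b _.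
by rewrite !H.
Qed.

Lemma sum_pairs2 n (Gf Hf : 'I_n -> 'I_n -> nat) (x y : 'I_n) : x != y ->
  (forall a b, ~ (a = x /\ b = y) -> ~ (a = y /\ b = x) -> Gf a b = Hf a b) ->
  (\sum_(a < n) \sum_(b < n) Gf a b + Hf x y + Hf y x =
   \sum_(a < n) \sum_(b < n) Hf a b + Gf x y + Gf y x)%N.
Proof.
move=> nxy H.
rewrite !pair_bigA /=.
have nyx : (y, x) != (x, y).
  by apply/negP => /eqP [] e; rewrite e eqxx in nxy.
have split2 : forall f : 'I_n * 'I_n -> nat, (\sum_p f p =
   f (x, y) + f (y, x) + \sum_(p | (p != (x, y)) && (p != (y, x))) f p)%N.
  move=> f; rewrite (bigD1 (x, y)) //= (bigD1 (y, x)) /=; last by rewrite nyx.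
  by rewrite addnA; congr (_ + _)%N; apply: eq_bigl => p; rewrite andbC.
rewrite (split2 (fun p => Gf p.1 p.2)) (split2 (fun p => Hf p.1 p.2)) /=.
have -> : (\sum_(i | (i != (x, y)) && (i != (y, x))) Gf i.1 i.2 =
           \sum_(i | (i != (x, y)) && (i != (y, x))) Hf i.1 i.2)%N.
  apply: eq_bigr => [[a b]] /andP [h1 h2] /=; apply: H.
    by case=> ??; subst; rewrite eqxx in h1.
  by case=> ??; subst; rewrite eqxx in h2.
set S := (\sum_(p | _) Hf p.1 p.2)%N; lia.
Qed.

Lemma tsw_ord n c (hc : (c.+1 < n)%N) (a : 'I_n) :
  val (tperm (Ordinal (ltnW hc)) (Ordinal hc) a) = tsw c a.
Proof.
rewrite /tsw; case: tpermP => [->|->|h1 h2] /=; rewrite ?eqxx //.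
  by rewrite (gtn_eqF (ltnSn c)).
case: (a =P c :> nat) => [e|_]; first by exfalso; apply: h1; apply: val_inj.
case: (a =P c.+1 :> nat) => [e|_] //; by exfalso; apply: h2; apply: val_inj.
Qed.

Lemma Fw_sw phi n c v : (c.+1 < n)%N ->
  (Fw phi n (sw c v) + phi (v c) (v c.+1) = Fw phi n v + phi (v c.+1) (v c))%N.
Proof.
move=> hc.
set x := Ordinal (ltnW hc); set y := Ordinal hc.
set t := tperm x y.
have ht : forall a, val (t a) = tsw c a by move=> a; exact: tsw_ord.
have -> : Fw phi n (sw c v) =
   (\sum_(a < n) \sum_(b < n) ((t a < t b)%N * phi (v a) (v b)))%N.
  rewrite /Fw (reindex_inj (@perm_inj _ t)); apply: eq_bigr => a _.
  rewrite (reindex_inj (@perm_inj _ t)); apply: eq_bigr => b _.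
  by rewrite /sw -!ht !tpermK.
have nxy : x != y by rewrite -val_eqE /= neq_ltn ltnSn.
have := @sum_pairs2 n (fun a b => ((t a < t b)%N * phi (v a) (v b))%N)
   (fun a b => ((a < b)%N * phi (v a) (v b))%N) x y nxy.
rewrite /t tpermL tpermR /= ltnSn ltnNge leqnSn /= !mul1n !mul0n !addn0.
move=> ->; first by rewrite /Fw.
move=> a b h1 h2; congr (_ * _)%N.
have h1' : ~ ((a:nat) = c /\ (b:nat) = c.+1).
  by case=> e1 e2; apply: h1; split; apply: val_inj.
have h2' : ~ ((a:nat) = c.+1 /\ (b:nat) = c).
  by case=> e1 e2; apply: h2; split; apply: val_inj.
rewrite -/t !ht /tsw.
by repeat case: ifP => /eqP ?; lia.
Qed.


Lemma phiD_oppl x y : phiD (- x)%R y = phiD x y.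
Proof. rewrite /phiD; lia. Qed.

Lemma Fw_ng n v : Fw phiD n (ng v) = Fw phiD n v.
Proof.
apply: eq_bigr => a _; apply: eq_bigr => b _.
rewrite /ng; case: (eqVneq (a : nat) 0%N) => ea; case: (eqVneq (b : nat) 0%N) => eb.
- by rewrite ea eb.
- by rewrite phiD_oppl ea.
- by rewrite eb ltn0 !mul0n.
- by [].
Qed.
Lemma actD_odd g x : actD g (- x)%R = (- actD g x)%R.
Proof.
rewrite /actD /swap_signed; case: g => [|g] /=;
by repeat case: ifP => /eqP ?; lia.
Qed.

Lemma evalw_odd w x : evalw actD w (- x)%R = (- evalw actD w x)%R.
Proof. by elim: w => //= g w IH; rewrite IH actD_odd. Qed.

Lemma actD_pos g a : (0 < g)%N -> actD g (Posz a.+1) = Posz (tsw g.-1 a).+1.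
Proof.
case: g => [//|g] _; rewrite /actD /swap_signed /tsw /=.
by repeat case: ifP => /eqP ?; lia.
Qed.

Lemma actD_zero a : actD 0 (Posz a.+1) =
  if a == 0%N then (-2)%R else if a == 1%N then (-1)%R else Posz a.+1.
Proof. by rewrite /actD /=; repeat case: ifP => /eqP ?; lia. Qed.
Lemma tsw_invol c a : tsw c (tsw c a) = a.
Proof.
rewrite /tsw; case: (eqVneq a c) => [->|h1]; first by rewrite (gtn_eqF (ltnSn c)) eqxx.
case: (eqVneq a c.+1) => [->|h2]; first by rewrite eqxx.
by rewrite (negbTE h1) (negbTE h2).
Qed.

Lemma tsw_lt n c a : (c.+1 < n)%N -> (a < n)%N -> (tsw c a < n)%N.
Proof. move=> *; rewrite /tsw; by repeat case: ifP => /eqP ?; lia. Qed.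

Lemma sum_sw n c (f : nat -> nat) : (c.+1 < n)%N ->
  (\sum_(a < n) f (tsw c a) = \sum_(a < n) f a)%N.
Proof.
move=> hc; set t := tperm (Ordinal (ltnW hc)) (Ordinal hc).
rewrite (reindex_inj (@perm_inj _ t)); apply: eq_bigr => a _.
by rewrite tsw_ord tsw_invol.
Qed.

Definition op0 (v : nat -> int) : nat -> int := sw 0 (ng (sw 0 (ng (sw 0 v)))).

Lemma op0E v a : op0 v a =
  if a == 0%N then (- v 1%N)%R else if a == 1%N then (- v 0%N)%R else v a.
Proof. by case: a => [|[|a]]. Qed.

Definition opD n (g : 'I_n) (v : nat -> int) : nat -> int :=
  if val g == 0%N then op0 v else sw (val g).-1 v.

Definition InvD n (v : nat -> int) : Prop :=
  [/\ forall a, (a < n)%N -> (0 < absz (v a) <= n)%N,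
      forall a b, (a < n)%N -> (b < n)%N -> absz (v a) = absz (v b) -> a = b
    & ~~ odd (\sum_(a < n) (v a < 0)%R)].

Lemma Fw_op0 n v : (1 < n)%N ->
  (Fw phiD n (op0 v) + (v 0%N + v 1%N < 0)%R = Fw phiD n v + (0 < v 0%N + v 1%N)%R)%N.
Proof.
move=> hn; rewrite /op0.
have h1 := Fw_sw phiD v hn.
have h2 := Fw_sw phiD (ng (sw 0 v)) hn.
have h3 := Fw_sw phiD (ng (sw 0 (ng (sw 0 v)))) hn.
rewrite !Fw_ng in h2 h3.
move: h1 h2 h3; rewrite /ng /sw /tsw /= /phiD. lia.
Qed.
Lemma InvD_resp n v v' : (forall a, (a < n)%N -> v a = v' a) -> InvD n v -> InvD n v'.
Proof.
move=> H [h1 h2 h3]; split.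
- by move=> a ha; rewrite -H //; apply: h1.
- by move=> a b ha hb; rewrite -!H //; apply: h2.
- by rewrite (eq_bigr (fun a : 'I_n => (v a < 0)%R : nat)) // => a _; rewrite H.
Qed.

Lemma InvD_sw n c v : (c.+1 < n)%N -> InvD n v -> InvD n (sw c v).
Proof.
move=> hc [h1 h2 h3]; split.
- by move=> a ha; apply: h1; apply: tsw_lt.
- move=> a b ha hb /h2 e; rewrite -(tsw_invol c a) -(tsw_invol c b).
  by rewrite e // tsw_lt.
- by rewrite /sw (sum_sw (fun a => (v a < 0)%R : nat)).
Qed.

Lemma sum_ord2 n (f : nat -> nat) : (\sum_(a < n.+2) f a = f 0%N + f 1%N + \sum_(a < n) f a.+2)%N.
Proof. by rewrite !big_ord_recl addnA. Qed.

Lemma InvD_op0 n v : (1 < n)%N -> InvD n v -> InvD n (op0 v).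
Proof.
case: n => [|[|n]] // _ [h1 h2 h3]; split.
- move=> a ha; rewrite op0E; case: ifP => [/eqP _|_].
    by rewrite abszN; apply: h1.
  case: ifP => [/eqP _|_]; last exact: h1.
  by rewrite abszN; apply: h1.
- have ea : forall a, absz (op0 v a) = absz (v (tsw 0 a)).
    by case=> [|[|a]] //=; rewrite abszN.
  move=> a b ha hb; rewrite !ea => /h2 e; rewrite -(tsw_invol 0 a) -(tsw_invol 0 b).
  by rewrite e // tsw_lt.
- move: h3; rewrite !(sum_ord2 _ (fun a => ((op0 v a) < 0)%R : nat))
     !(sum_ord2 _ (fun a => ((v a) < 0)%R : nat)) !op0E /=.
  have z0 : v 0%N != 0%R by apply/negP => /eqP e; have := h1 0%N isT; rewrite e.
  have z1 : v 1%N != 0%R by apply/negP => /eqP e; have := h1 1%N isT; rewrite e.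
  set R := (\sum_(a < n) _)%N.
  move/eqP: z0 => z0; move/eqP: z1 => z1.
  set A := (_ + _ + R)%N; set B := (_ + _ + R)%N.
  have e : (A + B = (R + 1).*2)%N by rewrite /A /B -addnn; lia.
  have : ~~ odd (A + B) by rewrite e odd_double.
  rewrite oddD; case: (odd A); case: (odd B) => //.
Qed.
Lemma sorted_adj n (v : nat -> int) :
  (forall c, (c.+1 < n)%N -> (v c <= v c.+1)%R) ->
  forall a b, (a <= b)%N -> (b < n)%N -> (v a <= v b)%R.
Proof.
move=> H a b hab; elim: b hab => [|b IH] hab hb.
  by rewrite leqn0 in hab; rewrite (eqP hab).
case: (ltngtP a b.+1) hab => // [hlt|->] _; last by [].
apply: le_trans (IH _ (ltnW hb)) (H _ hb); by [].
Qed.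

Lemma strict_id n (v : nat -> int) :
  (forall a b, (a < b)%N -> (b < n)%N -> (v a < v b)%R) ->
  (forall a, (a < n)%N -> (0 < v a)%R /\ (v a <= n%:Z)%R) ->
  forall a, (a < n)%N -> v a = Posz a.+1.
Proof.
move=> Hs Hb.
have low : forall a, (a < n)%N -> (Posz a.+1 <= v a)%R.
  elim=> [|a IH] ha; first by have [h _] := Hb 0%N ha; lia.
  have := IH (ltnW ha); have := Hs _ _ (ltnSn a) ha; lia.
have up : forall d, (d < n)%N -> (v (n.-1 - d)%N <= Posz (n - d))%R.
  elim=> [|d IH] hd.
    have [_ h] := Hb n.-1 ltac:(lia).
    by rewrite !subn0.
  have := IH (ltnW hd).
  have := Hs (n.-1 - d.+1)%N (n.-1 - d)%N ltac:(lia) ltac:(lia).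
  have -> : (n - d = (n - d.+1).+1)%N by lia.
  lia.
move=> a ha; have := low a ha; have := up (n.-1 - a)%N ltac:(lia).
have -> : (n.-1 - (n.-1 - a) = a)%N by lia.
have -> : (n - (n.-1 - a) = a.+1)%N by lia.
lia.
Qed.

Lemma Fw_zero phi n v : Fw phi n v = 0%N ->
  forall a b, (a < b)%N -> (b < n)%N -> phi (v a) (v b) = 0%N.
Proof.
move=> /eqP; rewrite /Fw sum_nat_eq0 => /forallP H a b hab hb.
have := H (Ordinal (ltn_trans hab hb)); rewrite sum_nat_eq0 => /forallP /(_ (Ordinal hb)).
by rewrite /= hab mul1n => /eqP.
Qed.

Lemma Fw_pos phi n v : (0 < Fw phi n v)%N ->
  exists a b, [/\ (a < b)%N, (b < n)%N & (0 < phi (v a) (v b))%N].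
Proof.
move=> H.
case: (boolP [exists a : 'I_n, exists b : 'I_n, (a < b)%N && (0 < phi (v a) (v b))%N]).
  move/existsP => [a /existsP [b /andP [h1 h2]]]; exists a, b; split => //.
rewrite negb_exists => /forallP Hn; exfalso; move: H.
rewrite /Fw big1 // => a _; apply: big1 => b _.
have := Hn a; rewrite negb_exists => /forallP /(_ b).
by case/nandP => [/negbTE -> // | ]; rewrite -leqNgt leqn0 => /eqP ->; rewrite muln0.
Qed.
Section DInst.
Variable n : nat.
Hypothesis hn : (1 < n)%N.
Notation winD := (winw (fun g : 'I_n => val g) actD).

Lemma win_rconsD (w : seq 'I_n) (g : 'I_n) a : (a < n)%N -> winD (rcons w g) a = opD g (winD w) a.
Proof.
move=> ha; rewrite /winw map_rcons evalw_rcons /opD.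
case: (eqVneq (val g) 0%N) => [->|hg].
  rewrite actD_zero op0E; case: ifP => _.
    by rewrite -evalw_odd; congr evalw; lia.
  case: ifP => _ //; by rewrite -evalw_odd; congr evalw; lia.
by rewrite actD_pos ?lt0n.
Qed.

Lemma opD_resp (g : 'I_n) v v' : (forall a, (a < n)%N -> v a = v' a) ->
   forall a, (a < n)%N -> opD g v a = opD g v' a.
Proof.
move=> H a ha; rewrite /opD; case: ifP => hg.
  rewrite !op0E; case: ifP => _; first by rewrite H //; lia.
  by case: ifP => _; rewrite H //; lia.
rewrite /sw H //; apply: tsw_lt => //.
by case: g hg => [[|g]] //= hg.
Qed.

Lemma InvD_win (w : seq 'I_n) : InvD n (winD w).
Proof.
elim/last_ind: w => [|w g IH].
  split.
  - by move=> a ha /=; rewrite /winw /=; lia.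
  - by move=> a b _ _ /= [].
  - by rewrite big1.
apply: InvD_resp (fun a ha => esym (win_rconsD w g ha)) _.
rewrite /opD; case: ifP => hg; first exact: InvD_op0.
by apply: InvD_sw => //; case: g hg => [[|g]] //= hg.
Qed.

Lemma stepD (g : 'I_n) v : (Fw phiD n (opD g v) <= (Fw phiD n v).+1)%N.
Proof.
rewrite /opD; case: ifP => hg.
  have := Fw_op0 v hn; lia.
have hc : ((val g).-1.+1 < n)%N by case: g hg => [[|g]] //= hg.
have := Fw_sw phiD v hc; rewrite /phiD; lia.
Qed.

Lemma baseD v : InvD n v -> Fw phiD n v = 0%N -> forall a, (a < n)%N -> v a = Posz a.+1.
Proof.
move=> [h1 h2 h3] H0.
have Z := Fw_zero H0.
have Hs : forall a b, (a < b)%N -> (b < n)%N -> (v a < v b)%R.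
  move=> a b hab hb; have := Z a b hab hb; rewrite /phiD.
  have : v a <> v b by move=> e; have := h2 a b (ltn_trans hab hb) hb; rewrite e => /(_ erefl); lia.
  lia.
have Hp : forall a, (0 < a)%N -> (a < n)%N -> (0 <= v a)%R.
  move=> a ha0 ha; have := Z 0%N a ha0 ha; have := Hs 0%N a ha0 ha; rewrite /phiD; lia.
have H0p : (0 <= v 0%N)%R.
  case: n hn h3 Hp => [|[|n']] // _ h3 Hp; move: h3.
  rewrite big_ord_recl /= big1 ?addn0.
    by case: ltP => //; lia.
  move=> a _; rewrite /bump leq0n add1n; have := Hp a.+1 isT (ltn_ord a); lia.
apply: strict_id => // a ha; have := h1 a ha.
have : (0 <= v a)%R by case: a ha => [|a] ha //; apply: Hp.
lia.
Qed.

Lemma descD v : InvD n v -> (0 < Fw phiD n v)%N -> exists g : 'I_n, (Fw phiD n (opD g v)).+1 = Fw phiD n v.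
Proof.
move=> _ Hpos.
case: (boolP [exists c : 'I_n, (c.+1 < n)%N && (v c.+1 < v c)%R]).
  move/existsP => [c /andP [hc hlt]].
  exists (Ordinal hc); rewrite /opD /=.
  have := Fw_sw phiD v hc; rewrite /phiD; lia.
rewrite negb_exists => /forallP Hn.
have Hadj : forall c, (c.+1 < n)%N -> (v c <= v c.+1)%R.
  move=> c hc; have := Hn (Ordinal (ltn_trans (ltnSn c) hc)); rewrite /= hc /=; lia.
have [a [b [hab hb hp]]] := Fw_pos Hpos.
have := sorted_adj Hadj (ltnW hab) hb.
have := sorted_adj Hadj (leq0n a) (ltn_trans hab hb).
have := sorted_adj Hadj (leq_ltn_trans (leq0n a) hab : (1 <= b)%N) hb.
move=> h1 h2 h3; rewrite /phiD in hp.
exists (Ordinal (ltn_trans (ltn0Sn 0) hn)); rewrite /opD /=.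
have := Fw_op0 v hn; lia.
Qed.

Lemma involD (g : 'I_n) v a : (a < n)%N -> opD g (opD g v) a = v a.
Proof.
move=> _; rewrite /opD; case: (val g == 0%N).
  by rewrite !op0E; case: a => [|[|a]] //=; rewrite ?opprK.
by rewrite /sw tsw_invol.
Qed.

Lemma nilD : Fw phiD n (winD [::]) = 0%N.
Proof.
rewrite /Fw big1 // => a _; rewrite big1 // => b _.
rewrite /winw /= /phiD.
case: (ltnP a b) => h; last by rewrite mul0n.
rewrite mul1n; lia.
Qed.

Lemma coxlenD (w : seq 'I_n) : coxlen (fun g : 'I_n => val g) actD n w = Fw phiD n (winD w).
Proof.
apply: (@gen_coxlen _ _ _ n (Fw phiD n) (InvD n) (@opD n)).
- exact: win_rconsD.
- exact: opD_resp.
- exact: Fw_resp.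
- exact: InvD_win.
- exact: stepD.
- exact: baseD.
- exact: descD.
- exact: involD.
- exact: nilD.
Qed.
End DInst.
Lemma actS_pos g a : actS g.+1 (Posz a.+1) = Posz (tsw g a).+1.
Proof. by rewrite /actS /tsw; repeat case: ifP => /eqP ?; lia. Qed.

Section SInst.
Variable n : nat.
Notation winS := (winw (fun g : 'I_n.-1 => (val g).+1) actS).
Definition opS (g : 'I_n.-1) (v : nat -> int) : nat -> int := sw (nat_of_ord g) v.
Definition InvS (v : nat -> int) : Prop :=
  (forall a, (a < n)%N -> (0 < v a)%R /\ (v a <= n%:Z)%R) /\
  (forall a b, (a < n)%N -> (b < n)%N -> v a = v b -> a = b).

Lemma ltS (g : 'I_n.-1) : ((nat_of_ord g).+1 < n)%N.
Proof. by case: g => g /=; case: n => // n'. Qed.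

Lemma win_rconsS (w : seq 'I_n.-1) (g : 'I_n.-1) a : (a < n)%N -> winS (rcons w g) a = opS g (winS w) a.
Proof. by move=> ha; rewrite /winw map_rcons evalw_rcons actS_pos. Qed.

Lemma opS_resp (g : 'I_n.-1) v v' : (forall a, (a < n)%N -> v a = v' a) ->
   forall a, (a < n)%N -> opS g v a = opS g v' a.
Proof. by move=> H a ha; rewrite /opS /sw H // tsw_lt // ltS. Qed.

Lemma InvS_win (w : seq 'I_n.-1) : InvS (winS w).
Proof.
elim/last_ind: w => [|w g IH].
  split; first by move=> a ha; rewrite /winw /=; lia.
  by move=> a b _ _ /= [].
have [h1 h2] := IH; split.
  by move=> a ha; rewrite win_rconsS // /opS /sw; apply: h1; rewrite tsw_lt // ltS.
move=> a b ha hb; rewrite !win_rconsS // /opS /sw => /h2 e.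
by rewrite -(tsw_invol g a) -(tsw_invol g b) e // tsw_lt // ltS.
Qed.

Lemma stepS (g : 'I_n.-1) v : (Fw phiS n (opS g v) <= (Fw phiS n v).+1)%N.
Proof. have := Fw_sw phiS v (ltS g); rewrite /opS /phiS; lia. Qed.

Lemma baseS v : InvS v -> Fw phiS n v = 0%N -> forall a, (a < n)%N -> v a = Posz a.+1.
Proof.
move=> [h1 h2] H0; have Z := Fw_zero H0.
apply: strict_id => // a b hab hb; have := Z a b hab hb; rewrite /phiS.
have : v a <> v b by move=> e; have := h2 a b (ltn_trans hab hb) hb e; lia.
lia.
Qed.

Lemma descS v : InvS v -> (0 < Fw phiS n v)%N -> exists g : 'I_n.-1, (Fw phiS n (opS g v)).+1 = Fw phiS n v.
Proof.
move=> _ Hpos.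
case: (boolP [exists c : 'I_n.-1, (v c.+1 < v c)%R]).
  move/existsP => [c hlt]; exists c.
  have := Fw_sw phiS v (ltS c); rewrite /opS /phiS; lia.
rewrite negb_exists => /forallP Hn.
have Hadj : forall c, (c.+1 < n)%N -> (v c <= v c.+1)%R.
  move=> c hc; have hc' : (c < n.-1)%N by lia.
  have := Hn (Ordinal hc'); rewrite /=; lia.
have [a [b [hab hb hp]]] := Fw_pos Hpos.
have := sorted_adj Hadj (ltnW hab) hb; rewrite /phiS in hp; lia.
Qed.

Lemma involS (g : 'I_n.-1) v a : (a < n)%N -> opS g (opS g v) a = v a.
Proof. by move=> _; rewrite /opS /sw tsw_invol. Qed.

Lemma nilS : Fw phiS n (winS [::]) = 0%N.
Proof.
rewrite /Fw big1 // => a _; rewrite big1 // => b _.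
rewrite /winw /= /phiS.
case: (ltnP a b) => h; last by rewrite mul0n.
rewrite mul1n; lia.
Qed.

Lemma coxlenS (w : seq 'I_n.-1) :
  coxlen (fun g : 'I_n.-1 => (val g).+1) actS n w = Fw phiS n (winS w).
Proof.
apply: (@gen_coxlen _ _ _ n (Fw phiS n) InvS opS).
- exact: win_rconsS.
- exact: opS_resp.
- exact: Fw_resp.
- exact: InvS_win.
- exact: stepS.
- exact: baseS.
- exact: descS.
- exact: involS.
- exact: nilS.
Qed.
End SInst.
Ltac ifs := repeat match goal with |- context[if ?b then _ else _] =>
  lazymatch b with context[if _ then _ else _] => fail | _ => case: (boolP b) => ? /= end end.

Definition actN (g x : nat) : nat := if x == g then g.+1 else if x == g.+1 then g else x.
Definition evN (w : seq nat) (x : nat) : nat := foldr actN x w.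

Lemma evN_cat w1 w2 x : evN (w1 ++ w2) x = evN w1 (evN w2 x).
Proof. by rewrite /evN foldr_cat. Qed.

Lemma actN_invol g x : actN g (actN g x) = x.
Proof.
rewrite /actN; case: (eqVneq x g) => [->|h1]; first by rewrite (gtn_eqF (ltnSn g)) eqxx.
case: (eqVneq x g.+1) => [->|h2]; first by rewrite eqxx.
by rewrite (negbTE h1) (negbTE h2).
Qed.

Lemma evN_rev w x : evN (rev w) (evN w x) = x.
Proof.
elim: w x => //= g w IH x; rewrite rev_cons -cats1 evN_cat /= actN_invol; exact: IH.
Qed.

Lemma evN_inj w x y : evN w x = evN w y -> x = y.
Proof. by move=> e; rewrite -(evN_rev w x) e evN_rev. Qed.

Lemma evN_pos w x : all (fun g => 0 < g)%N w -> (0 < x)%N -> (0 < evN w x)%N.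
Proof.
elim: w => //= g w IH /andP [hg hw] hx; have := IH hw hx; rewrite /actN.
by repeat case: ifP => /eqP ?; lia.
Qed.

Lemma evN_le n w x : all (fun g => g < n)%N w -> (x <= n)%N -> (evN w x <= n)%N.
Proof.
elim: w => //= g w IH /andP [hg hw] hx; have := IH hw hx; rewrite /actN.
by repeat case: ifP => /eqP ?; lia.
Qed.

Lemma evalwS_nat w x : evalw actS w (Posz x) = Posz (evN w x).
Proof.
elim: w => //= g w IH; rewrite IH /actS /actN.
by repeat case: ifP => /eqP ?; lia.
Qed.

Lemma evalwD_nat w x : all (fun g => 0 < g)%N w -> evalw actD w (Posz x) = Posz (evN w x).
Proof.
elim: w => //= g w IH /andP [hg hw]; rewrite IH // /actD /swap_signed /actN.
case: g hg {IH hw} => [//|g] _ /=.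
by repeat case: ifP => /eqP ?; lia.
Qed.

Lemma evN_iota a len x : evN (iota a len) x =
  if (a <= x < a + len)%N then x.+1 else if x == a + len then a else x.
Proof.
elim: len a => [|len IH] a /=; first by rewrite addn0; repeat case: ifP => ?; lia.
rewrite IH /actN; ifs; lia.
Qed.

Lemma evN_t k x : (0 < k)%N -> (0 < x)%N -> evN (t_word k) x =
  if (x < k)%N then x.+1 else if x == k then 1%N else x.
Proof.
move=> hk hx; rewrite /t_word evN_iota; ifs; lia.
Qed.

Lemma evN_tpow k e x : (0 < x)%N -> (x <= k)%N -> (e <= k)%N ->
  evN (tpow_word k e) x = if (x + e <= k)%N then (x + e)%N else (x + e - k)%N.
Proof.
move=> hx hxk; elim: e => [|e IH] he /=; first by rewrite /tpow_word /= addn0 hxk.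
rewrite /tpow_word /= evN_cat -/(tpow_word k e) IH ?(ltnW he) //.
rewrite evN_t; try lia; ifs; lia.
Qed.

Lemma evN_tpow_big k e x : (k < x)%N -> evN (tpow_word k e) x = x.
Proof.
move=> hx; elim: e => [|e IH] //=.
rewrite /tpow_word /= evN_cat -/(tpow_word k e) IH /t_word evN_iota.
ifs; lia.
Qed.
Definition Mof m (i : nat -> nat) := (\sum_(1 <= j < m.+1) i j)%N.
Definition Tof m (k i : nat -> nat) y := (\sum_(1 <= x < m.+1) (y <= k x) * i x)%N.

Lemma ogs_cons m k i : ogs_word m.+1 k i =
  tpow_word (k 1%N) (i 1%N) ++ ogs_word m (fun j => k j.+1) (fun j => i j.+1).
Proof.
rewrite /ogs_word /=; congr (_ ++ _).
have -> : iota 2 m = map S (iota 1 m).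
  by rewrite (iotaDl 1 1).
by rewrite -map_comp.
Qed.

Lemma Mof_cons m i : Mof m.+1 i = (i 1%N + Mof m (fun j => i j.+1))%N.
Proof. by rewrite /Mof big_nat_recl. Qed.

Lemma Tof_cons m k i y : Tof m.+1 k i y =
  ((y <= k 1%N) * i 1%N + Tof m (fun j => k j.+1) (fun j => i j.+1) y)%N.
Proof. by rewrite /Tof big_nat_recl. Qed.

Lemma Mof0 i : Mof 0 i = 0%N.
Proof. by rewrite /Mof big_geq. Qed.
Lemma Tof0 k i y : Tof 0 k i y = 0%N.
Proof. by rewrite /Tof big_geq. Qed.

Lemma tpow_pos k e : all (fun g => 0 < g)%N (tpow_word k e).
Proof.
elim: e => //= e IH; rewrite /tpow_word /= all_cat -/(tpow_word k e) IH andbT.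
by apply/allP => x; rewrite mem_iota; lia.
Qed.

Lemma tpow_lt n k e : (k <= n)%N -> all (fun g => g < n)%N (tpow_word k e).
Proof.
move=> hk; elim: e => //= e IH; rewrite /tpow_word /= all_cat -/(tpow_word k e) IH andbT.
by apply/allP => x; rewrite mem_iota; lia.
Qed.

Lemma ogs_pos m k i : all (fun g => 0 < g)%N (ogs_word m k i).
Proof.
elim: m k i => [|m IH] k i //; rewrite ogs_cons all_cat tpow_pos; exact: IH.
Qed.

Lemma ogs_lt n m k i : (forall j, (0 < j <= m)%N -> (k j <= n)%N) ->
  all (fun g => g < n)%N (ogs_word m k i).
Proof.
elim: m k i => [|m IH] k i H //; rewrite ogs_cons all_cat tpow_lt ?H //.
by apply: IH => j hj; apply: H; lia.
Qed.

Lemma kmono m k : (forall j, (0 < j < m)%N -> (k j < k j.+1)%N) ->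
  forall x y, (0 < x)%N -> (x <= y)%N -> (y <= m)%N -> (k x <= k y)%N.
Proof.
move=> H x y hx; elim: y => [|y IH] hxy hy; first lia.
case: (ltngtP x y.+1) hxy => // [hlt|->] _; last by [].
have := IH ltac:(lia) ltac:(lia); have := H y ltac:(lia); lia.
Qed.

Lemma Tof_all m k i y : (forall x, (0 < x <= m)%N -> (y <= k x)%N) -> Tof m k i y = Mof m i.
Proof.
move=> H; rewrite /Tof /Mof big_nat_cond [RHS]big_nat_cond; apply: eq_bigr => x /andP [hx _].
by rewrite H ?mul1n //; lia.
Qed.

Lemma Tof_leM m k i y : (Tof m k i y <= Mof m i)%N.
Proof. by apply: leq_sum => x _; case: (y <= k x)%N; rewrite ?mul1n ?mul0n. Qed.

Lemma Tof_anti m k i y y' : (y <= y')%N -> (Tof m k i y' <= Tof m k i y)%N.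
Proof.
move=> h; apply: leq_sum => x _; case: (leqP y' (k x)) => h1.
  by rewrite (leq_trans h h1).
by rewrite mul0n.
Qed.
Lemma ogs_props m : forall k i,
  (forall j, (0 < j < m)%N -> (k j < k j.+1)%N) ->
  (0 < m -> 0 < k 1%N)%N ->
  (Mof m i <= k 1%N)%N ->
  let P := evN (ogs_word m k i) in
  [/\ (forall y, (Mof m i < y)%N -> P (y - Tof m k i y)%N = y),
      (forall a a', (0 < a)%N -> (0 < a')%N -> (P a < P a')%N -> (P a' <= Mof m i)%N -> (a < a')%N)
    & (forall a, (0 < a)%N -> (0 < P a)%N -> (P a <= Mof m i)%N -> (k 1%N - Mof m i < a)%N)].
Proof.
elim: m => [|m IH] k i H1 H2 H3 P.
  rewrite /P /ogs_word /evN /= Mof0; split.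
  - by move=> y _; rewrite Tof0 subn0.
  - move=> *; lia.
  - move=> *; lia.
set k' := fun j => k j.+1; set i' := fun j => i j.+1.
have H1' : forall j, (0 < j < m)%N -> (k' j < k' j.+1)%N by move=> j hj; apply: H1; lia.
have HK : (0 < k 1%N)%N by apply: H2.
have hk12 : (0 < m)%N -> (k 1%N < k' 1%N)%N by move=> hm; apply: H1; lia.
have kmo := kmono H1.
set Mr := Mof m i'; set K := k 1%N; set e := i 1%N.
have HM : Mof m.+1 i = (e + Mr)%N by rewrite Mof_cons.
have H3e : (e + Mr <= K)%N by rewrite -HM.
have Mr0 : (0 < Mr)%N -> (0 < m)%N.
  by move=> h; case: (posnP m) => // hm; move: h; rewrite /Mr hm Mof0.
have H3' : (Mr <= k' 1%N)%N.
  case: (posnP m) => hm; first by rewrite /Mr hm Mof0.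
  have := hk12 hm; lia.
have H2' : (0 < m -> 0 < k' 1%N)%N by move=> hm; have := hk12 hm; lia.
have [P3r P1r P4r] := IH k' i' H1' H2' H3'.
set r := evN (ogs_word m k' i') in P3r P1r P4r.
have TrK : forall y, (y <= K)%N -> Tof m k' i' y = Mr.
  move=> y hy; apply: Tof_all => x hx; rewrite /k'.
  have := kmo 1%N x.+1 isT ltac:(lia) ltac:(lia); rewrite -/K; lia.
have rpos : forall x, (0 < x)%N -> (0 < r x)%N by move=> x hx; apply: evN_pos => //; exact: ogs_pos.
have rinj : forall x y, r x = r y -> x = y by move=> x y; apply: evN_inj.
have PE : forall x, P x = evN (tpow_word K e) (r x) by move=> x; rewrite /P ogs_cons evN_cat.
have heK : (e <= K)%N by lia.
have tlo : forall x, (0 < x)%N -> (x + e <= K)%N -> evN (tpow_word K e) x = (x + e)%N.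
  by move=> x hx hxe; rewrite evN_tpow ?hxe //; lia.
have thi : forall x, (K < x + e)%N -> (x <= K)%N -> evN (tpow_word K e) x = (x + e - K)%N.
  move=> x hxe hx; have hx0 : (0 < x)%N by lia.
  by rewrite evN_tpow // leqNgt hxe.
have tbig : forall x, (K < x)%N -> evN (tpow_word K e) x = x by move=> x hx; apply: evN_tpow_big.
have rhi : forall a x, (0 < a)%N -> r a = x -> (Mr < x)%N -> (x <= K)%N -> a = (x - Mr)%N.
  move=> a x ha hx h1 h2; apply: (rinj); rewrite hx; have := P3r x h1; rewrite TrK //.
have rleK : forall a, (0 < a)%N -> (P a <= e + Mr)%N -> (r a <= K)%N.
  move=> a ha; rewrite PE; case: (leqP (r a) K) => // h; rewrite tbig //; lia.
rewrite HM; split.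
- move=> y hy; rewrite Tof_cons -/K -/e PE.
  case: (leqP y K) => hyK.
    rewrite mul1n TrK // -/Mr.
    have := P3r (y - e)%N ltac:(lia); rewrite TrK; last lia.
    have -> : (y - (e + Mr) = y - e - Mr)%N by lia.
    move=> ->; rewrite tlo; lia.
  rewrite mul0n add0n P3r; last first.
    have := Tof_leM m k' i' y; lia.
  by rewrite tbig.
- move=> a a' ha ha' hlt hle.
  have hK := rleK a ha ltac:(lia); have hK' := rleK a' ha' hle.
  move: hlt hle; rewrite !PE.
  have xp := rpos a ha; have xp' := rpos a' ha'.
  case: (leqP (r a + e) K) => c1; case: (leqP (r a' + e) K) => c2.
  + rewrite !tlo // => hlt hle; apply: (P1r) => //; lia.
  + rewrite tlo // thi // => hlt; lia.
  + rewrite thi // tlo // => _ hle.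
    have -> := rhi a (r a) ha erefl ltac:(lia) hK.
    have hm : (0 < m)%N by apply: Mr0; lia.
    have := P4r a' ha' xp' ltac:(lia); have := hk12 hm; lia.
  + rewrite !thi // => hlt _.
    rewrite (rhi a (r a) ha erefl ltac:(lia) hK) (rhi a' (r a') ha' erefl ltac:(lia) hK'); lia.
- move=> a ha hp hle.
  have hK := rleK a ha hle; move: hp hle; rewrite !PE.
  have xp := rpos a ha.
  case: (leqP (r a + e) K) => c1.
    rewrite tlo // => _ hle.
    have hm : (0 < m)%N by apply: Mr0; lia.
    have := P4r a ha xp ltac:(lia); have := hk12 hm; rewrite -/K; lia.
  rewrite thi // => _ _.
  rewrite (rhi a (r a) ha erefl ltac:(lia) hK); lia.
Qed.
Definition sgn (b : bool) (y : nat) : int := if b then (- Posz y)%R else Posz y.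

Lemma map_toD n w : all (fun g => g < n)%N w -> map (fun g : 'I_n => val g) (toD n w) = w.
Proof.
elim: w => //= g w IH /andP [hg hw].
by rewrite /toD /= insubT /= -/(toD n w) IH.
Qed.

Lemma map_toS n w : all (fun g => 0 < g < n)%N w ->
  map (fun g : 'I_n.-1 => (val g).+1) (toS n w) = w.
Proof.
elim: w => //= g w IH /andP [hg hw].
have hg' : (g.-1 < n.-1)%N by lia.
rewrite /toS /= insubT /= -/(toS n w) IH //; congr (_ :: _); lia.
Qed.

Lemma wL_word_S L : (0 < L)%N -> wL_word L.+1 = L.+1 :: wL_word L ++ [:: L.+1].
Proof.
move=> hL; rewrite /wL_word.
have -> : iota 1 L.+1 = rcons (iota 1 L) L.+1.
  by rewrite -cats1 -(addn1 L) iotaD /= addnC.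
rewrite rev_rcons /=.
have -> : iota 2 L = iota 2 L.-1 ++ [:: L.+1].
  by rewrite -{1}(prednK hL) -(addn1 L.-1) iotaD; congr (_ ++ [:: _]); lia.
by rewrite -catA.
Qed.

Lemma actD_posN g y : (0 < g)%N -> actD g (Posz y) = Posz (actN g y).
Proof.
case: g => [//|g] _; rewrite /actD /swap_signed /actN /=.
by repeat case: ifP => /eqP ?; lia.
Qed.

Lemma evalw_sgn w b y : evalw actD w (sgn b y) = if b then (- evalw actD w (Posz y))%R else evalw actD w (Posz y).
Proof. by case: b; rewrite /sgn ?evalw_odd. Qed.

Lemma actD_sgn0 : True. Proof. by []. Qed.

Lemma wL_act L y : (0 < L)%N -> (0 < y)%N ->
  evalw actD (wL_word L) (Posz y) = sgn ((y == 1%N) || (y == L.+1)) y.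
Proof.
move=> hL; elim: L hL y => [//|L IH] _ y hy.
case: (posnP L) => [->|hL].
  rewrite /wL_word /= /sgn /actD /swap_signed /=; ifs; lia.
rewrite wL_word_S // /= evalw_cat /= actD_posN // IH //; last first.
  rewrite /actN; ifs; lia.
have hsg : forall g b z, (0 < g)%N -> actD g (sgn b z) = sgn b (actN g z).
  move=> g b z hg; case: b; rewrite /sgn ?actD_odd actD_posN //.
rewrite hsg // actN_invol.
have -> : ((actN L.+1 y == 1%N) || (actN L.+1 y == L.+1)) = ((y == 1%N) || (y == L.+2)).
  rewrite /actN; ifs; lia.
by [].
Qed.
Lemma W_act s y : all (fun L => 0 < L)%N s -> uniq s -> (0 < y)%N ->
  exists b, evalw actD (flatten (map wL_word s)) (Posz y) = sgn b y /\
            ((1 < y)%N -> b = (y.-1 \in s)).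
Proof.
move=> hs us hy; elim: s hs us => [|a s IH] /= hs us.
  by exists false; split => //.
case/andP: hs => ha hs; case/andP: us => nas us.
have [b [e1 e2]] := IH hs us.
exists (b (+) ((y == 1%N) || (y == a.+1))); split.
  rewrite evalw_cat e1 evalw_sgn wL_act //.
  by case: (b); case: (_ || _); rewrite /sgn ?opprK.
move=> hy1; rewrite e2 // in_cons.
have -> : (y == 1%N) = false by apply/negbTE; lia.
rewrite /=.
case: (eqVneq y.-1 a) => [ea|na].
  have -> : (y == a.+1) = true by apply/eqP; lia.
  by rewrite ea (negbTE nas).
have -> : (y == a.+1) = false by apply/negbTE/eqP => ey; rewrite ey /= eqxx in na.
by rewrite addbF.
Qed.

Lemma phi_pair x y bx by_ : x <> y -> (0 < x)%N -> (0 < y)%N ->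
  phiD (sgn bx x) (sgn by_ y) = (phiS (Posz x) (Posz y) + 2 * (by_ && (x < y)%N))%N.
Proof.
move=> nxy hx hy; rewrite /phiD /phiS /sgn.
case: bx; case: by_ => /=; lia.
Qed.

Lemma sum_ltn n c : (c <= n)%N -> (\sum_(a < n) (a < c)%N = c)%N.
Proof.
elim: n c => [|n IH] c hc; first by rewrite big_ord0; lia.
rewrite big_ord_recr /=.
case: (leqP c n) => h.
  by rewrite IH // addn0.
have -> : c = n.+1 by lia.
rewrite (eq_bigr (fun a : 'I_n => 1%N)) ?sum1_card ?card_ord /= ?ltnSn ?addn1 //.
by move=> a _ /=; rewrite ltnS ltnW.
Qed.

Lemma count_lt (P : nat -> nat) n y :
  (forall x, (0 < x <= n)%N -> (0 < P x <= n)%N) ->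
  (forall x x', (0 < x <= n)%N -> (0 < x' <= n)%N -> P x = P x' -> x = x') ->
  (0 < y <= n.+1)%N ->
  (\sum_(a < n) (P a.+1 < y)%N = y.-1)%N.
Proof.
move=> H1 H2 hy.
have hlt : forall a : 'I_n, ((P a.+1).-1 < n)%N.
  by move=> a; have := H1 a.+1 ltac:(have := ltn_ord a; lia); lia.
set h := fun a : 'I_n => Ordinal (hlt a).
have hinj : injective h.
  move=> a b /(congr1 val) /= e; apply: val_inj => /=.
  have := H1 a.+1 ltac:(have := ltn_ord a; lia); have := H1 b.+1 ltac:(have := ltn_ord b; lia).
  move=> h1 h2; have e' : P a.+1 = P b.+1 by lia.
  have := H2 a.+1 b.+1 ltac:(have := ltn_ord a; lia) ltac:(have := ltn_ord b; lia) e'; lia.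
rewrite -[RHS](sum_ltn (n := n)); last lia.
rewrite [RHS](reindex_inj hinj); apply: eq_bigr => a _ /=.
have := H1 a.+1 ltac:(have := ltn_ord a; lia); lia.
Qed.

Lemma memL_sum (L : nat -> nat) u y :
  (forall j, (1 <= j <= u)%N -> (1 <= L j)%N) ->
  (forall j j', (1 <= j <= u)%N -> (1 <= j' <= u)%N -> j <> j' -> L j <> L j') ->
  (0 < y)%N ->
  (\sum_(1 <= j < u.+1) (y == (L j).+1) = (y.-1 \in [seq L j | j <- iota 1 u]))%N.
Proof.
move=> HL Hd hy.
have us : uniq [seq L j | j <- iota 1 u].
  rewrite map_inj_in_uniq ?iota_uniq // => j j'; rewrite !mem_iota => h1 h2 e.
  case: (eqVneq j j') => // ne; exfalso; apply: (Hd j j') e; [lia|lia|by apply/eqP].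
rewrite -count_uniq_mem // count_map.
rewrite /index_iota subSS subn0.
elim: (iota 1 u) => [|j s IH]; first by rewrite big_nil.
rewrite big_cons IH /=; congr (_ + _)%N.
case: (eqVneq y (L j).+1) => [->|ne] /=; first by rewrite eqxx.
by move/eqP: ne => ne; case: eqP => //; lia.
Qed.

Lemma sum_point n (Q : nat -> nat) y (f : nat -> nat) b0 :
  (b0 < n)%N -> Q b0 = y -> (forall b, (b < n)%N -> Q b = y -> b = b0) ->
  (\sum_(b < n) (Q b == y) * f b = f b0)%N.
Proof.
move=> hb0 hq Hu.
rewrite (bigD1 (Ordinal hb0)) //= hq eqxx mul1n big1 ?addn0 // => b nb.
case: (eqVneq (Q b) y) => [e|ne]; last by rewrite mul0n.
by have := Hu b (ltn_ord b) e => eb; rewrite -val_eqE /= eb eqxx in nb.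
Qed.
Lemma find_q m k y : (forall j, (0 < j < m)%N -> (k j < k j.+1)%N) -> (0 < m)%N ->
  (k 1%N <= y)%N -> (y < k m)%N ->
  exists q, [/\ (2 <= q <= m)%N, (k q.-1 <= y)%N & (y < k q)%N].
Proof.
move=> Hk hm h1 h2.
have ex : exists q, (0 < q)%N && (y < k q)%N by exists m; rewrite hm h2.
case: (ex_minnP ex) => q /andP [hq0 hq] Hmin.
have hqm : (q <= m)%N by apply: Hmin; rewrite hm h2.
have hq1 : q != 1%N by apply/eqP => e; rewrite e in hq; lia.
exists q; split => //; first lia.
case: (leqP (k q.-1) y) => // hlt.
have := Hmin q.-1; rewrite hlt andbT; have -> : (0 < q.-1)%N by lia.
move=> /(_ isT); lia.
Qed.

Lemma Tof_split m k i y q : (forall j, (0 < j < m)%N -> (k j < k j.+1)%N) ->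
  (2 <= q <= m)%N -> (k q.-1 < y)%N -> (y <= k q)%N ->
  Tof m k i y = (\sum_(q <= x < m.+1) i x)%N.
Proof.
move=> Hk hq h1 h2; have kmo := kmono Hk.
rewrite /Tof (big_cat_nat (n := q)) /=; [|lia|lia].
rewrite big_nat_cond big1 ?add0n; last first.
  move=> x /andP [/andP [hx1 hx2] _]; have := kmo x q.-1 ltac:(lia) ltac:(lia) ltac:(lia).
  by case: leqP => //; lia.
apply: eq_big_nat => x hx; have := kmo q x ltac:(lia) ltac:(lia) ltac:(lia).
case: leqP => //; lia.
Qed.

Lemma key_cnt n m k i (L0 r : nat) :
  (0 < m)%N -> (2 <= k 1%N)%N -> (forall j, (0 < j < m)%N -> (k j < k j.+1)%N) ->
  (k m <= n)%N -> (Mof m i <= k 1%N)%N ->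
  (1 <= L0 <= n.-1)%N ->
  ((L0 < Mof m i)%N \/ (k m <= L0)%N -> r = L0) ->
  ((Mof m i <= L0 < k 1%N)%N -> r = (L0 - Mof m i)%N) ->
  (forall q, (2 <= q <= m)%N -> (k q.-1 <= L0 < k q)%N -> r = (L0 - \sum_(q <= x < m.+1) i x)%N) ->
  let P := evN (ogs_word m k i) in
  let b0 := (evN (rev (ogs_word m k i)) L0.+1).-1 in
  [/\ (b0 < n)%N, P b0.+1 = L0.+1 & (\sum_(a < n) ((a < b0)%N * (P a.+1 < P b0.+1)%N) = r)%N].
Proof.
move=> hm hk1 Hk hkm HM hL R1 R2 R3 P b0.
set O := ogs_word m k i.
have kmo := kmono Hk.
have lettO : all (fun g => g < n)%N O.
  apply: ogs_lt => j hj; have := kmo j m ltac:(lia) ltac:(lia) (leqnn m); lia.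
have posO : all (fun g => 0 < g)%N O by apply: ogs_pos.
have Ppos : forall x, (0 < x)%N -> (0 < P x)%N by move=> x hx; apply: evN_pos.
have Ple : forall x, (x <= n)%N -> (P x <= n)%N by move=> x hx; apply: evN_le.
have Pinj : forall x y, P x = P y -> x = y by move=> x y; apply: evN_inj.
set y0 := L0.+1.
have hQ : (0 < evN (rev O) y0 <= n)%N.
  apply/andP; split; first by apply: evN_pos; rewrite ?all_rev.
  apply: evN_le; rewrite ?all_rev //; lia.
have hb0 : b0.+1 = evN (rev O) y0.
  by rewrite /b0 -/O -/y0; case/andP: hQ => h1 _; lia.
have Pb0 : P b0.+1 = y0 by rewrite hb0 /P -/O -{1}(revK O) evN_rev.
have [P3 P1 _] := ogs_props Hk (fun _ => (ltn_trans (ltnSn 0) hk1 : (0 < k 1%N)%N)) HM.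
rewrite -/O -/P in P3 P1.
split; [lia | exact: Pb0 | rewrite Pb0].
case: (leqP y0 (Mof m i)) => hy.
-
  rewrite R1; last by left; rewrite /y0 in hy; lia.
  rewrite -[RHS]/(y0.-1) -(count_lt (P := P) (n := n) (y := y0)); first last.
  + lia.
  + by move=> x x' _ _; apply: Pinj.
  + by move=> x hx; rewrite Ppos ?Ple //; lia.
  apply: eq_bigr => a _.
  case: (ltnP (P a.+1) y0) => h; last by rewrite muln0.
  have := P1 a.+1 b0.+1 isT isT ltac:(rewrite Pb0; lia) ltac:(rewrite Pb0; lia).
  by rewrite ltnS => ->.
-
  have hT := P3 y0 hy.
  have hb : b0.+1 = (y0 - Tof m k i y0)%N by apply: Pinj; rewrite hT Pb0.
  have hTM := Tof_leM m k i y0.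
  have -> : (\sum_(a < n) ((a < b0)%N * (P a.+1 < y0)%N) = \sum_(a < n) (a < b0)%N)%N.
    apply: eq_bigr => a _; case: (ltnP a b0) => hab; last by rewrite mul0n.
    rewrite mul1n; case: (ltnP (P a.+1) y0) => // hge; exfalso.
    have hne : P a.+1 <> y0 by move=> e; have := Pinj _ _ (etrans e (esym Pb0)); lia.
    set z := P a.+1 in hge hne.
    have hz := P3 z ltac:(lia).
    have ea : a.+1 = (z - Tof m k i z)%N by apply: Pinj; rewrite hz.
    have hyz : (y0 < z)%N by lia.
    have := Tof_anti m k i (ltnW hyz); lia.
  rewrite sum_ltn; last lia.
  case: (leqP (k m) L0) => hkmL.
    rewrite R1; last by right.
    have : Tof m k i y0 = 0%N.
      rewrite /Tof big_nat_cond big1 // => x /andP [hx _].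
      have := kmo x m ltac:(lia) ltac:(lia) (leqnn m); case: leqP => //; rewrite /y0; lia.
    lia.
  case: (ltnP L0 (k 1%N)) => hL1.
    rewrite R2; last by rewrite /y0 in hy; lia.
    have : Tof m k i y0 = Mof m i.
      apply: Tof_all => x hx; have := kmo 1%N x isT ltac:(lia) ltac:(lia); rewrite /y0; lia.
    lia.
  have [q [hq1 hq2 hq3]] := find_q Hk hm hL1 hkmL.
  rewrite (R3 q hq1); last lia.
  have := Tof_split i Hk hq1 (ltac:(rewrite /y0; lia) : (k q.-1 < y0)%N) hq3.
  lia.
Qed.
Unset Implicit Arguments.
Theorem mainTheorem15 (n m u : nat) (k i L rho : nat -> nat) :
  (1 <= m)%N ->
  (2 <= k 1)%N ->
  (forall j, (1 <= j < m)%N -> (k j < k j.+1)%N) ->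
  (k m <= n)%N ->
  (forall j, (1 <= j <= m)%N -> (1 <= i j <= (k j).-1)%N) ->
  let M := (\sum_(1 <= j < m.+1) i j)%N in
  (M <= k 1)%N ->
  (forall j, (1 <= j <= u)%N -> (1 <= L j <= n.-1)%N) ->
  (forall j j', (1 <= j <= u)%N -> (1 <= j' <= u)%N -> j <> j' -> L j <> L j') ->
  (forall j, (1 <= j <= u)%N ->
     (((L j < M)%N \/ (k m <= L j)%N) -> rho j = L j) /\
     ((M <= L j < k 1)%N -> rho j = (L j - M)%N) /\
     (forall q, (2 <= q <= m)%N -> (k q.-1 <= L j < k q)%N ->
        rho j = (L j - \sum_(q <= x < m.+1) i x)%N)) ->
  lenD n (flatten [seq wL_word (L j) | j <- iota 1 u] ++ ogs_word m k i)
  = (lenS n (ogs_word m k i) + 2 * \sum_(1 <= j < u.+1) rho j)%N.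
Proof.
move=> hm hk1 Hk hkm Hi M HM HL Hd Hrho.
set O := ogs_word m k i.
set Ls := [seq L j | j <- iota 1 u].
have eW : flatten [seq wL_word (L j) | j <- iota 1 u] = flatten (map wL_word Ls).
  by rewrite /Ls -map_comp.
rewrite eW; set W := flatten (map wL_word Ls).
have kmo := kmono Hk.
have hn : (1 < n)%N by have := kmo 1%N m isT hm (leqnn m); lia.
have lettO : all (fun g => g < n)%N O.
  apply: ogs_lt => j hj; have := kmo j m ltac:(lia) ltac:(lia) (leqnn m); lia.
have posO : all (fun g => 0 < g)%N O by apply: ogs_pos.
have LsP : all (fun x => 0 < x <= n.-1)%N Ls.
  by apply/allP => x /mapP [j]; rewrite mem_iota => hj ->; apply: HL; lia.
have lettW : all (fun g => g < n)%N W.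
  apply/allP => g /flattenP [s /mapP [x hx ->] hg].
  have /andP [hx1 hx2] := allP LsP x hx.
  move: hg; rewrite /wL_word mem_cat mem_rev in_cons !mem_iota; lia.
have usL : uniq Ls.
  rewrite map_inj_in_uniq ?iota_uniq // => j j'; rewrite !mem_iota => h1 h2 e.
  case: (eqVneq j j') => // ne; exfalso; apply: (Hd j j') e; [lia|lia|by apply/eqP].
have LsPos : all (fun x => 0 < x)%N Ls by apply/allP => x /(allP LsP); lia.
rewrite /lenD /lenS (coxlenD hn) coxlenS /winw map_toD; last by rewrite all_cat lettW lettO.
rewrite map_toS; last first.
  by apply/allP => g hg; have := allP lettO g hg; have := allP posO g hg; lia.
set P := evN O.
have Ppos : forall x, (0 < x)%N -> (0 < P x)%N by move=> x hx; apply: evN_pos.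
have Ple : forall x, (x <= n)%N -> (P x <= n)%N by move=> x hx; apply: evN_le.
have Pinj : forall x y, P x = P y -> x = y by move=> x y; apply: evN_inj.
set bit := fun y => (evalw actD W (Posz y) < 0)%R.
have Wy : forall y, (0 < y)%N -> evalw actD W (Posz y) = sgn (bit y) y /\
                     ((1 < y)%N -> bit y = (y.-1 \in Ls)).
  move=> y hy; have [b [e1 e2]] := W_act LsPos usL hy.
  have eb : bit y = b by rewrite /bit e1 /sgn; case: b {e1 e2}; lia.
  by rewrite eb e1; split.
have vD : forall a, evalw actD (W ++ O) (Posz a.+1) = sgn (bit (P a.+1)) (P a.+1).
  by move=> a; rewrite evalw_cat evalwD_nat // -/P; case: (Wy _ (Ppos a.+1 isT)).
have vS : forall a, evalw actS O (Posz a.+1) = Posz (P a.+1) by move=> a; rewrite evalwS_nat.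
rewrite /Fw.
set X := (\sum_(a < n) \sum_(b < n) ((a < b)%N * ((P b.+1).-1 \in Ls) * (P a.+1 < P b.+1)%N))%N.
have step1 : (\sum_(a < n) \sum_(b < n) ((a < b)%N * phiD (evalw actD (W ++ O) (Posz a.+1)) (evalw actD (W ++ O) (Posz b.+1))) =
   \sum_(a < n) \sum_(b < n) ((a < b)%N * phiS (evalw actS O (Posz a.+1)) (evalw actS O (Posz b.+1))) + 2 * X)%N.
  rewrite /X big_distrr -big_split /=; apply: eq_bigr => a _.
  rewrite big_distrr -big_split /=; apply: eq_bigr => b _.
  rewrite vD vD vS vS.
  case: (ltnP a b) => hab; last by rewrite !mul0n.
  have hne : P a.+1 <> P b.+1 by move/Pinj; lia.
  rewrite phi_pair // ?Ppos // !mul1n; congr (_ + 2 * _)%N.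
  have hb := Wy (P b.+1) (Ppos b.+1 isT).
  case: (ltnP 1 (P b.+1)) => hb1.
    by rewrite hb.2 //; case: (_ \in _); case: (_ < _)%N.
  have -> : (P a.+1 < P b.+1)%N = false by have := Ppos a.+1 isT; lia.
  by rewrite andbF muln0.
rewrite step1; congr (_ + 2 * _)%N.
set cnt := fun b : nat => (\sum_(a < n) ((a < b)%N * (P a.+1 < P b.+1)%N))%N.
have step2 : X = (\sum_(b < n) ((P b.+1).-1 \in Ls) * cnt b)%N.
  rewrite /X exchange_big /=; apply: eq_bigr => b _; rewrite /cnt big_distrr /=.
  by apply: eq_bigr => a _; rewrite mulnCA mulnA.
rewrite step2.
have step3 : (\sum_(b < n) ((P b.+1).-1 \in Ls) * cnt b =
   \sum_(b < n) \sum_(1 <= j < u.+1) ((P b.+1 == (L j).+1) * cnt b))%N.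
  apply: eq_bigr => b _; rewrite -big_distrl /= memL_sum //.
  - by move=> j hj; have := HL j hj; lia.
  - exact: Ppos.
rewrite step3 exchange_big /=.
apply: eq_big_nat => j hj.
have [R1 [R2 R3]] := Hrho j hj.
have [hb0 Pb0 hcnt] := key_cnt hm hk1 Hk hkm HM (HL j hj) R1 R2 R3.
rewrite -/O -/P in Pb0 hcnt.
rewrite (@sum_point n (fun b => P b.+1) (L j).+1 cnt _ hb0 Pb0) //.
by move=> b hb e; apply: succn_inj; apply: Pinj; rewrite e Pb0.
Qed.
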